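(* Let $H=(E,\{X_i:i\in[n]\})$ be a hypergraph and $t_1,\dots,t_n$ integers with $0\le t_i\le|X_i|$ satisfying: (H1) every vertex lies in at least two hyperedges; (H2) $|X_i\cap X_j|\le1$ for all distinct $i,j$; (H3) there are no $a,b,c\in E$ with $\{a,b\},\{a,c\},\{b,c\}$ all hyperedges; (T) for each $i$, either $t_i=1$ or $\min\{w(e):e\in X_i\}\le t_i<|X_i|$. Let $\rho(A)=\sum_{i=1}^n\min\{|A\cap X_i|,t_i\}$ for $A\subseteq E$. If the line graph $G_H$ is $(k+1)$-critical, then $\rho$ is an excluded minor for $\mathcal{D}_k$.
   Context: A polymatroid on a finite set $E$ is a function $\rho:2^E\to\mathbb{Z}$ that is normalized, non-decreasing and submodular. A hypergraph is $H=(E,\mathcal{E})$ with $E$ finite and $\mathcal{E}=\{X_i:i\in[n]\}$ a set of nonempty subsets of $E$; $w(e)$ is the number of hyperedges containing $e$. The line graph $G_H$ has vertex set $[n]$ with $ij$ an edge iff $i\ne j$ and $X_i\cap X_j\ne\emptyset$. A graph is $(k+1)$-critical if it has chromatic number $k+1$ but deleting any single edge gives chromatic number $k$. $\mathcal{D}_k$ is the class of polymatroids that can be written as $r_{M_1}+\cdots+r_{M_k}$ for matroids $M_1,\dots,M_k$ on the ground set. For $A\subseteq E$, the deletion $\rho_{\backslash A}$ and contraction $\rho_{/A}$ on $E-A$ are $\rho_{\backslash A}(X)=\rho(X)$ and $\rho_{/A}(X)=\rho(X\cup A)-\rho(A)$; minors are $(\rho_{\backslash A})_{/B}$ for disjoint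 $A,B$, proper if $A\cup B\ne\emptyset$. An excluded minor for a minor-closed class is a polymatroid not in the class all of whose proper minors are in the class. *)

(* Defs.v *)
From HB Require Import structures.
From mathcomp Require Import all_boot all_order all_algebra.
Set Implicit Arguments. Unset Strict Implicit. Unset Printing Implicit Defensive.
Import Order.TTheory GRing.Theory Num.Theory.

Local Open Scope ring_scope.

Section Defs.
Variable E : finType.

(** A set function [f] on the subsets of a ground set [S] (a subset of the
    ambient finite type [E]); values outside subsets of [S] are irrelevant. *)

Definition polymatroid (S : {set E}) (f : {set E} -> int) : Prop :=
  [/\ f set0 = 0,
      (forall X Y : {set E}, X \subset Y -> Y \subset S -> f X <= f Y) &
      (forall X Y : {set E}, X \subset S -> Y \subset S ->
          f (X :|: Y) + f (X :&: Y) <= f X + f Y)].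

Definition matroid_rank (S : {set E}) (r : {set E} -> int) : Prop :=
  [/\ (forall X : {set E}, X \subset S -> 0 <= r X /\ r X <= (#|X|)%:Z),
      (forall X Y : {set E}, X \subset Y -> Y \subset S -> r X <= r Y) &
      (forall X Y : {set E}, X \subset S -> Y \subset S ->
          r (X :|: Y) + r (X :&: Y) <= r X + r Y)].

Definition in_Dk (k : nat) (S : {set E}) (f : {set E} -> int) : Prop :=
  exists r : 'I_k -> ({set E} -> int),
    (forall i, matroid_rank S (r i)) /\
    (forall X : {set E}, X \subset S -> f X = \sum_(i < k) r i X).

(** The minor (f \ A) / B, a set function on ground set S :\: (A :|: B). *)
Definition minor (f : {set E} -> int) (A B : {set E}) : {set E} -> int :=
  fun X => f (X :|: B) - f B.

Definition excluded_minor_Dk (k : nat) (f : {set E} -> int) : Prop :=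
  [/\ polymatroid [set: E] f,
      ~ in_Dk k [set: E] f &
      (forall A B : {set E}, [disjoint A & B] -> A :|: B != set0 ->
          in_Dk k (~: (A :|: B)) (minor f A B))].

Definition hypergraph (n : nat) (X : 'I_n -> {set E}) : Prop :=
  injective X /\ (forall i, X i != set0).

Definition hdeg (n : nat) (X : 'I_n -> {set E}) (e : E) : nat :=
  #|[set i | e \in X i]|.

Definition line_graph (n : nat) (X : 'I_n -> {set E}) : rel 'I_n :=
  fun i j => (i != j) && (X i :&: X j != set0).

Definition rho_of (n : nat) (X : 'I_n -> {set E}) (t : 'I_n -> nat)
  : {set E} -> int :=
  fun A => \sum_(i < n) (minn #|A :&: X i| (t i))%:Z.

End Defs.

Definition colorable (V : finType) (G : rel V) (m : nat) : Prop :=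
  exists c : V -> 'I_m, forall u v, G u v -> c u != c v.

Definition chromatic_number_is (V : finType) (G : rel V) (m : nat) : Prop :=
  colorable G m /\ (forall j, (j < m)%N -> ~ colorable G j).

Definition delete_edge (V : finType) (G : rel V) (u v : V) : rel V :=
  fun x y => G x y && ~~ (((x == u) && (y == v)) || ((x == v) && (y == u))).

Definition critical (V : finType) (G : rel V) (k : nat) : Prop :=
  chromatic_number_is G k.+1 /\
  (forall u v, G u v -> chromatic_number_is (delete_edge G u v) k).

(* Main.v *)
Require Import Defs.
From HB Require Import structures.
From mathcomp Require Import all_boot all_order all_algebra zify ring lra.
Set Implicit Arguments. Unset Strict Implicit. Unset Printing Implicit Defensive.
Import Order.TTheory GRing.Theory Num.Theory.
Local Open Scope ring_scope.


Section Gen.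
Variable (E : finType) (n : nat).

Definition mterm (Y : {set E}) (s : nat) (Z : {set E}) : nat := minn #|Z :&: Y| s.

Lemma mterm_mono Y s (Z Z' : {set E}) : Z \subset Z' -> (mterm Y s Z <= mterm Y s Z')%N.
Proof.
move=> sZ; rewrite /mterm.
have : (#|Z :&: Y| <= #|Z' :&: Y|)%N by apply: subset_leq_card; apply: setSI.
lia.
Qed.

Lemma mterm_sub Y s (Z Z' : {set E}) :
  (mterm Y s (Z :|: Z') + mterm Y s (Z :&: Z') <= mterm Y s Z + mterm Y s Z')%N.
Proof.
rewrite /mterm.
have h := cardUI (Z :&: Y) (Z' :&: Y).
have e1 : [predU Z :&: Y & Z' :&: Y] =i (Z :|: Z') :&: Y.
  by move=> x; rewrite !inE; case: (x \in Z); case: (x \in Z'); case: (x \in Y).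
have e2 : [predI Z :&: Y & Z' :&: Y] =i (Z :&: Z') :&: Y.
  by move=> x; rewrite !inE; case: (x \in Z); case: (x \in Z'); case: (x \in Y).
rewrite (eq_card e1) (eq_card e2) in h.
have h1 : (#|Z :&: Y| <= #|(Z :|: Z') :&: Y|)%N.
  by apply: subset_leq_card; apply: setSI; apply: subsetUl.
have h2 : (#|Z' :&: Y| <= #|(Z :|: Z') :&: Y|)%N.
  by apply: subset_leq_card; apply: setSI; apply: subsetUr.
lia.
Qed.

Definition msum (P : pred 'I_n) (Y : 'I_n -> {set E}) (s : 'I_n -> nat)
  (Z : {set E}) : int := \sum_(i | P i) (mterm (Y i) (s i) Z)%:Z.

Lemma msum_mono P Y s (Z Z' : {set E}) : Z \subset Z' -> msum P Y s Z <= msum P Y s Z'.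
Proof.
move=> sZ; apply: ler_sum => i _; rewrite lez_nat; exact: mterm_mono.
Qed.

Lemma msum_sub P Y s (Z Z' : {set E}) :
  msum P Y s (Z :|: Z') + msum P Y s (Z :&: Z') <= msum P Y s Z + msum P Y s Z'.
Proof.
rewrite /msum -!big_split /=; apply: ler_sum => i _.
rewrite -!PoszD lez_nat; exact: mterm_sub.
Qed.

Lemma msum_ge0 P Y s Z : 0 <= msum P Y s Z.
Proof. by apply: sumr_ge0 => i _. Qed.

Lemma msum0 P Y s : msum P Y s set0 = 0.
Proof. by apply: big1 => i _; rewrite /mterm set0I cards0 min0n. Qed.

Lemma rho_msum (X : 'I_n -> {set E}) t : rho_of X t = msum xpredT X t.
Proof. by []. Qed.

Lemma rho_poly (X : 'I_n -> {set E}) t : polymatroid [set: E] (rho_of X t).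
Proof.
rewrite rho_msum /polymatroid; split.
- exact: msum0.
- by move=> A B sAB _; apply: msum_mono.
- by move=> A B _ _; apply: msum_sub.
Qed.

End Gen.


Lemma two_card (T : finType) (S : {set T}) x y :
  x \in S -> y \in S -> x != y -> (1 < #|S|)%N.
Proof. by move=> hx hy hxy; apply/card_gt1P; exists x, y. Qed.

Lemma card_sumI (T : finType) (Z Y : {set T}) :
  #|Z :&: Y| = (\sum_(x in Z) (x \in Y : nat))%N.
Proof.
rewrite -sum1_card big_mkcond /= [RHS]big_mkcond /=; apply: eq_bigr => x _.
by rewrite !inE; case: (x \in Z); case: (x \in Y).
Qed.

Lemma msum_nat (E : finType) n P (Y : 'I_n -> {set E}) s Z :
  msum P Y s Z = (\sum_(i | P i) mterm (Y i) (s i) Z)%N%:Z.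
Proof. by rewrite /msum (big_morph Posz PoszD (erefl _)). Qed.

Section Minor.
Variables (E : finType) (n : nat) (X : 'I_n -> {set E}) (t : 'I_n -> nat) (k : nat).
Hypothesis H1 : forall e : E, (2 <= hdeg X e)%N.
Hypothesis H2 : forall i j, i != j -> (#|X i :&: X j| <= 1)%N.
Hypothesis Hcrit : forall u v, line_graph X u v ->
  chromatic_number_is (delete_edge (line_graph X) u v) k.

Lemma minors_in_Dk (A B : {set E}) : [disjoint A & B] -> A :|: B != set0 ->
  in_Dk k (~: (A :|: B)) (minor (rho_of X t) A B).
Proof.
move=> dAB /set0Pn [e eAB].
have /card_gt1P [u [v [uin vin uv]]] := H1 e.
rewrite inE in uin; rewrite inE in vin.
have Guv : line_graph X u v.
  by rewrite /line_graph uv /=; apply/set0Pn; exists e; rewrite inE uin vin.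
have [[col Hcol] _] := Hcrit Guv.
pose Y i := X i :\: (A :|: B).
pose s i := (t i - #|B :&: X i|)%N.
have disj : forall i i' x, i != i' -> col i = col i' -> x \in Y i -> x \in Y i' -> False.
  move=> i i' x ii' ci xi xi'.
  rewrite in_setD in xi; rewrite in_setD in xi'.
  case/andP: xi => xAB xXi; case/andP: xi' => _ xXi'.
  have G' : line_graph X i i'.
    by rewrite /line_graph ii' /=; apply/set0Pn; exists x; rewrite inE xXi xXi'.
  have key : (i == u) && (i' == v) || (i == v) && (i' == u).
    apply/negPn/negP => h; have := Hcol i i'.
    by rewrite /delete_edge G' h ci eqxx /= => /(_ isT).
  have eii : e \in X i :&: X i'.
    by case/orP: key => /andP[/eqP -> /eqP ->]; rewrite inE ?uin ?vin.
  have := H2 ii'.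
  suff : (1 < #|X i :&: X i'|)%N by case: (#|X i :&: X i'|) => [|[|]].
  apply: (@two_card _ _ x e) => //; first by rewrite inE xXi xXi'.
  by apply/eqP => exe; subst x; rewrite eAB in xAB.
exists (fun c => msum (fun i => col i == c) Y s); split.
  move=> c; split.
  - move=> Z _; split; first exact: msum_ge0.
    rewrite msum_nat lez_nat.
    apply: (@leq_trans (\sum_(i | col i == c) #|Z :&: Y i|)%N).
      by apply: leq_sum => i _; rewrite /mterm geq_minl.
    under eq_bigr => i _ do rewrite card_sumI.
    rewrite exchange_big /= -sum1_card.
    apply: leq_sum => x _.
    case: (pickP [pred i | (col i == c) && (x \in Y i)]) => [i0 /andP[ci0 xi0] | none].
      rewrite (bigD1 i0) //= xi0 big1 // => i /andP[ci ii0].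
      case xi: (x \in Y i) => //; exfalso.
      by apply: (disj i i0 x ii0) => //; rewrite (eqP ci) (eqP ci0).
    rewrite big1 // => i ci; have := none i; rewrite /= ci.
    by case: (x \in Y i).
  - by move=> Z Z' sZ _; apply: msum_mono.
  - by move=> Z Z' _ _; apply: msum_sub.
move=> Z sZ.
rewrite /minor /rho_of -sumrB.
rewrite (partition_big col xpredT) //=.
apply: eq_bigr => c _; apply: eq_bigr => i _.
rewrite /mterm /s.
have -> : #|Z :&: Y i| = #|Z :&: X i|.
  apply: eq_card => x; rewrite !inE.
  case xZ: (x \in Z) => //=.
  have := subsetP sZ x xZ; rewrite !inE => -> //.
have -> : #|(Z :|: B) :&: X i| = (#|Z :&: X i| + #|B :&: X i|)%N.
  rewrite setIUl cardsU.
  have -> : (Z :&: X i) :&: (B :&: X i) = set0.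
    apply/setP => x; rewrite !inE.
    case xZ: (x \in Z) => //=; have := subsetP sZ x xZ; rewrite !inE.
    by case: (x \in B); rewrite ?orbT // andbF.
  by rewrite cards0 subn0.
apply/eqP; rewrite subr_eq -PoszD; apply/eqP; congr Posz; lia.
Qed.
End Minor.


Lemma sum_rest0 (k : nat) (f : 'I_k -> int) c :
  (forall j, 0 <= f j) -> \sum_j f j <= f c -> forall j, j != c -> f j = 0.
Proof.
move=> f0 hs j jc; apply/eqP; rewrite eq_le f0 andbT.
move: hs; rewrite (bigD1 c) //= (bigD1 j) /= ?jc //.
have : 0 <= \sum_(i | (i != c) && (i != j)) f i by apply: sumr_ge0.
lra.
Qed.

Lemma exists_pos (k : nat) (f : 'I_k -> int) :
  0 < \sum_j f j -> exists j, 0 < f j.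
Proof.
move=> hs; have [/existsP [j hj]|] := boolP [exists j, 0 < f j]; first by exists j.
rewrite negb_exists => /forallP h.
have : \sum_j f j <= \sum_(j < k) (0:int).
  by apply: ler_sum => j _; have := h j; rewrite -leNgt.
rewrite big1_eq; lra.
Qed.

Lemma pigeon (k : nat) (f : 'I_k -> int) (C : {set 'I_k}) :
  (forall j, 0 <= f j) -> (forall j, j \in C -> 1 <= f j) ->
  (#|C|%:Z <= \sum_j f j).
Proof.
move=> f0 fC; rewrite (bigID (mem C)) /=.
have : 0 <= \sum_(i | i \notin C) f i by apply: sumr_ge0.
have : #|C|%:Z <= \sum_(i | i \in C) f i.
  rewrite -sum1_card (big_morph Posz PoszD (erefl _)).
  by apply: ler_sum => j jC; apply: fC.
lra.
Qed.

Lemma sum_bool_le1 (T : finType) (P Q : pred T) :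
  (forall a b, P a -> P b -> Q a -> Q b -> a = b) -> (\sum_(a | P a) (Q a : nat) <= 1)%N.
Proof.
move=> h; case: (pickP [pred a | P a && Q a]) => [a0 /andP[pa0 qa0] | none].
  rewrite (bigD1 a0) //= qa0 big1 // => a /andP[pa aa0].
  case qa: (Q a) => //; exfalso.
  by move: aa0; rewrite (h a a0) ?eqxx.
rewrite big1 // => a pa; have := none a; rewrite /= pa.
by case: (Q a).
Qed.

Lemma le_sum1 (k : nat) (f : 'I_k -> int) c :
  (forall j, 0 <= f j) -> f c <= \sum_j f j.
Proof.
move=> f0; rewrite (bigD1 c) //=.
have : 0 <= \sum_(i | i != c) f i by apply: sumr_ge0.
lra.
Qed.

Lemma sum_ge2 (k : nat) (f : 'I_k -> int) c1 c2 :
  (forall j, 0 <= f j) -> c1 != c2 -> f c1 + f c2 <= \sum_j f j.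
Proof.
move=> f0 c12; rewrite (bigD1 c1) //= (bigD1 c2) /=; last by rewrite eq_sym c12.
have : 0 <= \sum_(i | (i != c1) && (i != c2)) f i by apply: sumr_ge0.
lra.
Qed.

Lemma sum_only (k : nat) (f : 'I_k -> int) c :
  (forall j, j != c -> f j = 0) -> \sum_j f j = f c.
Proof.
by move=> h; rewrite (bigD1 c) //= big1 ?addr0 // => j; apply: h.
Qed.

Lemma setD1U (T : finType) (Y : {set T}) a b : a != b -> (Y :\ a) :|: (Y :\ b) = Y.
Proof.
move=> ab; apply/setP => x; rewrite !inE -andb_orl.
case: (x \in Y); rewrite ?andbF ?andbT //.
by case xa: (x == a) => //=; rewrite (eqP xa).
Qed.

Lemma sum_ge3 (k : nat) (f : 'I_k -> int) c1 c2 c3 :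
  (forall j, 0 <= f j) -> c1 != c2 -> c1 != c3 -> c2 != c3 ->
  f c1 + f c2 + f c3 <= \sum_j f j.
Proof.
move=> f0 c12 c13 c23; rewrite (bigD1 c1) //= (bigD1 c2) /=; last by rewrite eq_sym c12.
rewrite (bigD1 c3) /=; last by rewrite eq_sym c13 eq_sym c23.
have : 0 <= \sum_(i | ((i != c1) && (i != c2)) && (i != c3)) f i by apply: sumr_ge0.
lra.
Qed.

Lemma setD1I (T : finType) (Y : {set T}) a b : (Y :\ a) :&: (Y :\ b) = Y :\ a :\ b.
Proof.
apply/setP => x; rewrite !inE.
by case: (x == a); case: (x == b); case: (x \in Y).
Qed.

Lemma cardD1in (T : finType) (Y : {set T}) a : a \in Y -> #|Y :\ a| = (#|Y| - 1)%N.
Proof. by move=> aY; rewrite (cardsD1 a Y) aY add1n subSS subn0. Qed.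

Lemma ar_tp2 t : ((0.+1 + t).+1 - t = 2)%N. Proof. lia. Qed.
Lemma ar_a t : (((0.+1 + t).+1 - 1) - t = 1)%N. Proof. lia. Qed.
Lemma ar_b t : (((0.+1 + t).+1 - 1) - 1 = t)%N. Proof. lia. Qed.

Lemma ar_c m t : ((m.+1 + t).+1 - t = m.+2)%N. Proof. lia. Qed.
Lemma ar_d m t : ((m + t).+1 - t = m.+1)%N. Proof. lia. Qed.

Lemma sub_card (T : finType) (A : {set T}) m : (m <= #|A|)%N ->
  exists S : {set T}, S \subset A /\ #|S| = m.
Proof.
elim: m => [|m IH] h; first by exists set0; rewrite sub0set cards0.
have [S [sS hS]] := IH (ltnW h).
have : (0 < #|A :\: S|)%N by rewrite cardsD (setIidPr sS) hS subn_gt0.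
rewrite card_gt0 => /set0Pn [y]; rewrite inE => /andP[yS yA].
exists (y |: S); split; first by rewrite subUset sub1set yA sS.
by rewrite cardsU1 yS hS.
Qed.

Lemma other_pos (k : nat) (f : 'I_k -> int) j :
  (forall j', 0 <= f j') -> (forall j', f j' <= 1) -> 2 <= \sum_j' f j' ->
  exists j', j' != j /\ 1 <= f j'.
Proof.
move=> f0 f1 h2.
have [/existsP [j' /andP[jj hj]]|] := boolP [exists j', (j' != j) && (1 <= f j')].
  by exists j'.
rewrite negb_exists => /forallP hn.
have : \sum_j' f j' = f j.
  apply: sum_only => j' jj; have := hn j'; rewrite jj /= -ltNge => h.
  by apply/eqP; rewrite eq_le f0 andbT -ltzD1 add0r.
move: h2 => /[swap] ->; have := f1 j; lra.
Qed.

Lemma sum_ge4 (k : nat) (f : 'I_k -> int) c1 c2 c3 c4 :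
  (forall j, 0 <= f j) -> c1 != c2 -> c1 != c3 -> c1 != c4 -> c2 != c3 -> c2 != c4 -> c3 != c4 ->
  f c1 + f c2 + f c3 + f c4 <= \sum_j f j.
Proof.
move=> f0 c12 c13 c14 c23 c24 c34; rewrite (bigD1 c1) //= (bigD1 c2) /=; last by rewrite eq_sym c12.
rewrite (bigD1 c3) /=; last by rewrite eq_sym c13 eq_sym c23.
rewrite (bigD1 c4) /=; last by rewrite eq_sym c14 eq_sym c24 eq_sym c34.
have : 0 <= \sum_(i | (((i != c1) && (i != c2)) && (i != c3)) && (i != c4)) f i by apply: sumr_ge0.
lra.
Qed.

Lemma ar_e a b : (a - b - 1 + b).+1 = a -> True. Proof. by []. Qed.

Section Hard.
Variables (E : finType) (n : nat) (X : 'I_n -> {set E}) (t : 'I_n -> nat) (k : nat).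
Variable r : 'I_k -> {set E} -> int.
Hypothesis Hr : forall j, matroid_rank [set: E] (r j).
Hypothesis Hsum : forall A, rho_of X t A = \sum_(j < k) r j A.
Hypothesis Ht1 : forall i, (1 <= t i)%N.
Hypothesis H2 : forall i j, i != j -> (#|X i :&: X j| <= 1)%N.
Implicit Types (A B S D Y : {set E}) (x y z : E).

Lemma r_ge0 j A : 0 <= r j A.
Proof. by case: (Hr j) => h _ _; case: (h A (subsetT A)). Qed.
Lemma r_le j A : r j A <= #|A|%:Z.
Proof. by case: (Hr j) => h _ _; case: (h A (subsetT A)). Qed.
Lemma r_mono j (A B : {set E}) : A \subset B -> r j A <= r j B.
Proof. by case: (Hr j) => _ h _ sAB; apply: h => //; apply: subsetT. Qed.
Lemma r_sub j (A B : {set E}) : r j (A :|: B) + r j (A :&: B) <= r j A + r j B.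
Proof. by case: (Hr j) => _ _ h; apply: h; apply: subsetT. Qed.
Lemma r_pt j x : r j [set x] <= 1.
Proof. by have := r_le j [set x]; rewrite cards1. Qed.
Lemma r0 j : r j set0 = 0.
Proof. by apply/eqP; rewrite eq_le r_ge0 andbT; have := r_le j set0; rewrite cards0. Qed.

Definition g j y A := r j [set y] + r j A - r j (y |: A).
Definition nl j A := \sum_(x in A) r j [set x] - r j A.
Definition delta A : int := \sum_(m < n) ((#|A :&: X m| - t m)%N)%:Z.
Definition SAT y A := [set m | (y \in X m) && (t m <= #|A :&: X m|)%N].

Lemma g_ge0 j y A : 0 <= g j y A.
Proof.
rewrite /g; have := r_sub j [set y] A => h.
have := r_ge0 j ([set y] :&: A); lra.
Qed.

Lemma g_le_pt j y A : g j y A <= r j [set y].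
Proof. by rewrite /g; have := r_mono j (subsetUr [set y] A);  lra. Qed.

Lemma g_le1 j y A : g j y A <= 1.
Proof. by have := g_le_pt j y A; have := r_pt j y; lra. Qed.

Lemma g_mono j y (A B : {set E}) : A \subset B -> y \notin B -> g j y A <= g j y B.
Proof.
move=> sAB yB; rewrite /g.
have := r_sub j (y |: A) B.
have -> : (y |: A) :|: B = y |: B.
  by apply/setP => x; rewrite !inE; case: (x == y); case: (x \in B) (subsetP sAB x) => //=; case: (x \in A) => // ->.
have -> : (y |: A) :&: B = A.
  apply/setP => x; rewrite !inE; case xy: (x == y) => /=.
    rewrite (eqP xy) (negbTE yB); apply/esym/negbTE; apply: contra yB => /(subsetP sAB) //.
  by case xA: (x \in A) => //=; rewrite (subsetP sAB x xA).
lra.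
Qed.

Lemma n_add j y A : y \notin A -> nl j (y |: A) = nl j A + g j y A.
Proof. by move=> yA; rewrite /nl /g big_setU1 //=; ring. Qed.

Lemma sum_setUI (f : E -> int) (A B : {set E}) :
  \sum_(x in A :|: B) f x + \sum_(x in A :&: B) f x = \sum_(x in A) f x + \sum_(x in B) f x.
Proof.
rewrite (@big_setID _ _ _ _ (A :|: B) B) /= (@big_setID _ _ _ _ A B) /=.
have -> : (A :|: B) :&: B = B by apply/setP => x; rewrite !inE; case: (x \in A); case: (x \in B).
have -> : (A :|: B) :\: B = A :\: B by apply/setP => x; rewrite !inE; case: (x \in A); case: (x \in B).
ring.
Qed.

Lemma n_sup j (A B : {set E}) : nl j A + nl j B <= nl j (A :|: B) + nl j (A :&: B).
Proof.
rewrite /nl; have := sum_setUI (fun x => r j [set x]) A B; have := r_sub j A B; lra.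
Qed.

Lemma n0 j : nl j set0 = 0.
Proof. by rewrite /nl big_set0 r0 subr0. Qed.

Lemma n_ge0 j A : 0 <= nl j A.
Proof.
elim: {A}#|A| {-2}A (erefl #|A|) => [|m IH] A hA.
  by move/eqP: hA; rewrite cards_eq0 => /eqP ->; rewrite n0.
have /set0Pn [x xA] : A != set0 by rewrite -card_gt0 hA.
have -> : A = x |: (A :\ x) by rewrite setD1K.
rewrite n_add ?setD11 //.
have hm : #|A :\ x| = m by move: hA; rewrite (cardsD1 x A) xA add1n => -[].
have := IH _ hm.
have := g_ge0 j x (A :\ x); lra.
Qed.

Lemma n_mono j (A B : {set E}) : A \subset B -> nl j A <= nl j B.
Proof.
move=> sAB; have := n_sup j A (B :\: A).
have -> : A :|: (B :\: A) = B by apply/setP => x; rewrite !inE; case xA: (x \in A) => //=; rewrite (subsetP sAB x xA).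
have -> : A :&: (B :\: A) = set0 by apply/setP => x; rewrite !inE; case: (x \in A); rewrite ?andbF.
rewrite n0; have := n_ge0 j (B :\: A); lra.
Qed.

Lemma cardIs1 x (Y : {set E}) : #|[set x] :&: Y| = (x \in Y).
Proof. by rewrite (card_sumI [set x] Y) big_set1. Qed.

Lemma card_sumZ (T : finType) (S : {set T}) : #|S|%:Z = \sum_m ((m \in S) : nat)%:Z.
Proof.
rewrite -sum1_card (big_morph Posz PoszD (erefl _)) big_mkcond /=.
by apply: eq_bigr => m _; case: (m \in S).
Qed.

Lemma rho_pt x : rho_of X t [set x] = \sum_m ((x \in X m) : nat)%:Z.
Proof.
apply: eq_bigr => m _; rewrite cardIs1; have := Ht1 m.
by case: (x \in X m) => /= h; congr Posz; lia.
Qed.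

Lemma Nsum A : \sum_j nl j A = delta A.
Proof.
rewrite /nl sumrB exchange_big /=.
under eq_bigr => x _ do rewrite -Hsum rho_pt.
rewrite -Hsum exchange_big /= /delta /rho_of -sumrB.
apply: eq_bigr => m _.
rewrite -(big_morph Posz PoszD (erefl _)) -card_sumI.
rewrite /mterm; lia.
Qed.

Lemma cardU1I y A Y : y \notin A -> #|(y |: A) :&: Y| = ((y \in Y) + #|A :&: Y|)%N.
Proof.
move=> yA; rewrite setIUl cardsU cardIs1.
have -> : ([set y] :&: Y) :&: (A :&: Y) = set0.
  apply/setP => x; rewrite !inE; case xy: (x == y) => //=.
  by rewrite (eqP xy) (negbTE yA) andbF.
by rewrite cards0 subn0.
Qed.

Lemma Gsum y A : y \notin A -> \sum_j g j y A = #|SAT y A|%:Z.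
Proof.
move=> yA.
have -> : \sum_j g j y A = \sum_j nl j (y |: A) - \sum_j nl j A.
  by rewrite -sumrB; apply: eq_bigr => j _; rewrite n_add //; ring.
rewrite !Nsum /delta -sumrB card_sumZ; apply: eq_bigr => m _.
rewrite cardU1I // inE.
by case: (y \in X m) => /=; lia.
Qed.

Lemma pair_unique m m' x y : x != y -> x \in X m -> y \in X m ->
  x \in X m' -> y \in X m' -> m = m'.
Proof.
move=> xy xm ym xm' ym'; apply/eqP/negPn/negP => mm.
have := H2 mm.
suff : (1 < #|X m :&: X m'|)%N by case: (#|X m :&: X m'|) => [|[|]].
by apply: (two_card (x := x) (y := y)); rewrite // inE ?xm ?xm' ?ym ?ym'.
Qed.

Lemma SAT_card y A : y \notin A -> (#|SAT y A| <= #|A|)%N.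
Proof.
move=> yA.
rewrite -sum1_card.
apply: (@leq_trans (\sum_(m in SAT y A) #|A :&: X m|)).
  apply: leq_sum => m; rewrite inE => /andP[_ h]; have := Ht1 m; lia.
under eq_bigr => m _ do rewrite card_sumI.
rewrite exchange_big /= -sum1_card; apply: leq_sum => x xA.
apply: sum_bool_le1 => a b; rewrite !inE => /andP[ya _] /andP[yb _] xa xb.
apply: (pair_unique (x := x) (y := y)) => //.
by apply: contraNneq yA => <-.
Qed.

Lemma delta_sub i A : A \subset X i -> delta A = ((#|A| - t i)%N)%:Z.
Proof.
move=> sA; rewrite /delta (bigD1 i) //= big1 ?addr0.
  by rewrite (setIidPl sA).
move=> m mi; have := H2 mi; rewrite setIC => h3; have h2 := Ht1 m.
have h1 : (#|A :&: X m| <= #|X i :&: X m|)%N by apply: subset_leq_card; apply: setSI.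
congr Posz; lia.
Qed.

Lemma nl_le_delta j A : nl j A <= delta A.
Proof. by rewrite -Nsum; apply: le_sum1 => j'; apply: n_ge0. Qed.

Lemma nl_delta0 j A : delta A = 0 -> nl j A = 0.
Proof. by move=> h; apply/eqP; rewrite eq_le n_ge0 andbT -h nl_le_delta. Qed.

Lemma F1_ind i m : forall Y, Y \subset X i -> #|Y| = (m + t i).+1 ->
  exists c, forall j, j != c -> nl j Y = 0.
Proof.
elim: m => [|m IH] Y sY hY.
  have hd : delta Y = 1 by rewrite (delta_sub sY) hY; congr Posz; lia.
  have [c hc] : exists c, 0 < nl c Y by apply: exists_pos; rewrite Nsum hd.
  exists c; apply: sum_rest0 => [j|]; first exact: n_ge0.
  by rewrite Nsum hd; lia.
have ht := Ht1 i.
have /set0Pn [a aY] : Y != set0 by rewrite -card_gt0 hY.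
have hYa : #|Y :\ a| = (m + t i).+1 by rewrite cardD1in // hY subn1 addSn.
have /set0Pn [b bYa] : Y :\ a != set0 by rewrite -card_gt0 hYa.
have hYab : #|Y :\ a :\ b| = (m + t i)%N by rewrite cardD1in // hYa subn1.
have /set0Pn [z zYab] : Y :\ a :\ b != set0 by rewrite -card_gt0 hYab addn_gt0 ht orbT.
move: (bYa) (zYab); rewrite !inE => /andP[ba bY] /and3P[zb za zY].
have sYa : Y :\ a \subset X i by apply: subset_trans sY; apply: subD1set.
have sYb : Y :\ b \subset X i by apply: subset_trans sY; apply: subD1set.
have sYz : Y :\ z \subset X i by apply: subset_trans sY; apply: subD1set.
have hYb : #|Y :\ b| = (m + t i).+1 by rewrite cardD1in // hY subn1 addSn.
have hYz : #|Y :\ z| = (m + t i).+1 by rewrite cardD1in // hY subn1 addSn.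
have [ca hca] := IH _ sYa hYa.
have [cb hcb] := IH _ sYb hYb.
have [cz hcz] := IH _ sYz hYz.
have one : forall (W : {set E}) c, W \subset X i ->
    (forall j, j != c -> nl j W = 0) -> nl c W = ((#|W| - t i)%N)%:Z.
  by move=> W c sW hc; rewrite -(delta_sub sW) -Nsum (sum_only hc).
have YaYb : (Y :\ a) :|: (Y :\ b) = Y by rewrite setD1U // eq_sym.
have YaIYb : (Y :\ a) :&: (Y :\ b) = Y :\ a :\ b by rewrite setD1I.
have sYab : Y :\ a :\ b \subset X i by apply: subset_trans sYa; apply: subD1set.
have cab : ca = cb.
  case: (posnP m) => [m0|mpos].
  - (* |Y| = t + 2 *)
    rewrite m0 in hY.
    apply/eqP/negPn/negP => cab.
    have hdY : \sum_j nl j Y = 2 by rewrite Nsum (delta_sub sY) hY ar_tp2.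
    have f0 : forall j, 0 <= nl j Y by move=> j; apply: n_ge0.
    have nw : forall w c, w \in Y -> (forall j, j != c -> nl j (Y :\ w) = 0) ->
        nl c (Y :\ w) = 1.
      move=> w c wY hc; have sW : Y :\ w \subset X i.
        by apply: subset_trans sY; apply: subD1set.
      by rewrite (one _ _ sW hc) cardD1in // hY ar_a.
    have mw : forall w c, w \in Y -> (forall j, j != c -> nl j (Y :\ w) = 0) ->
        1 <= nl c Y.
      move=> w c wY hc; rewrite -(nw w c wY hc); apply: n_mono; apply: subD1set.
    have dbl : forall w w' c, w \in Y -> w' \in Y -> w != w' ->
        (forall j, j != c -> nl j (Y :\ w) = 0) ->
        (forall j, j != c -> nl j (Y :\ w') = 0) -> 2 <= nl c Y.
      move=> w w' c wY w'Y ww' hc hc'.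
      have hz : #|Y :\ w :\ w'| = t i.
        by rewrite cardD1in; [rewrite cardD1in // hY ar_b | rewrite !inE w'Y eq_sym ww'].
      have sWz : Y :\ w :\ w' \subset X i.
        by apply: subset_trans sY; apply: subset_trans (subD1set _ _) (subD1set _ _).
      have h0 : nl c (Y :\ w :\ w') = 0 by apply: nl_delta0; rewrite (delta_sub sWz) hz subnn.
      have := n_sup c (Y :\ w) (Y :\ w'); rewrite setD1U ?setD1I //.
      by rewrite h0 (nw w c wY hc) (nw w' c w'Y hc'); lra.
    have az : a != z by rewrite eq_sym.
    have bz : b != z by rewrite eq_sym.
    case: (eqVneq cz ca) => [eza|nza].
      have hc' : forall j, j != ca -> nl j (Y :\ z) = 0 by rewrite -eza.
      have := dbl a z ca aY zY az hca hc'.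
      have := mw b cb bY hcb; have := sum_ge2 f0 cab; rewrite hdY; lra.
    case: (eqVneq cz cb) => [ezb|nzb].
      have hc' : forall j, j != cb -> nl j (Y :\ z) = 0 by rewrite -ezb.
      have := dbl b z cb bY zY bz hcb hc'.
      have := mw a ca aY hca; have := sum_ge2 f0 cab; rewrite hdY; lra.
    have ac : ca != cz by rewrite eq_sym.
    have bc : cb != cz by rewrite eq_sym.
    have := sum_ge3 f0 cab ac bc; rewrite hdY.
    have := mw a ca aY hca; have := mw b cb bY hcb; have := mw z cz zY hcz; lra.
  - have sW1 : Y :\ a :\ b \subset Y :\ a by apply: subD1set.
    have sW2 : Y :\ a :\ b \subset Y :\ b.
      apply/subsetP => x; rewrite !inE => /and3P[-> _ ->]; by [].
    have hdW : 0 < \sum_j nl j (Y :\ a :\ b).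
      by rewrite Nsum (delta_sub sYab) hYab addnK ltz_nat.
    have [c' hc'] := exists_pos hdW.
    have e1 : c' = ca.
      apply/eqP/negPn/negP => h; have := hca _ h; have := n_mono c' sW1; lra.
    have e2 : c' = cb.
      apply/eqP/negPn/negP => h; have := hcb _ h; have := n_mono c' sW2; lra.
    by rewrite -e1 -e2.
exists ca; apply: sum_rest0 => [j|]; first exact: n_ge0.
rewrite Nsum (delta_sub sY) hY ar_c.
have := n_sup ca (Y :\ a) (Y :\ b); rewrite YaYb YaIYb.
rewrite (one _ _ sYa hca) hYa ar_d.
have hcb' : forall j, j != ca -> nl j (Y :\ b) = 0 by rewrite cab.
rewrite (one _ _ sYb hcb') hYb ar_d.
have := nl_le_delta ca (Y :\ a :\ b); rewrite (delta_sub sYab) hYab addnK.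
have -> : (m.+2)%:Z = m%:Z + 2 by rewrite -addn2 PoszD.
have -> : (m.+1)%:Z = m%:Z + 1 by rewrite -addn1 PoszD.
lra.
Qed.

Definition unif i c := forall S y, S \subset X i -> #|S| = t i ->
  y \in X i -> y \notin S -> g c y S = 1.

Lemma F1 i : (t i < #|X i|)%N -> exists c, unif i c.
Proof.
move=> lt.
have hX : #|X i| = ((#|X i| - t i - 1) + t i).+1.
  by move: lt; clear; lia.
have [c hc] := F1_ind (subxx (X i)) hX.
exists c => S y sS hS yX yS.
have sSy : y |: S \subset X i by rewrite subUset sub1set yX sS.
have nS : forall j, nl j S = 0.
  by move=> j; apply: nl_delta0; rewrite (delta_sub sS) hS subnn.
have hg : forall j, g j y S = nl j (y |: S).
  by move=> j; rewrite n_add // nS add0r.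
rewrite hg.
have h0 : forall j, j != c -> nl j (y |: S) = 0.
  move=> j jc; apply/eqP; rewrite eq_le n_ge0 andbT -(hc j jc).
  exact: n_mono.
rewrite -(sum_only h0) Nsum (delta_sub sSy) cardsU1 yS hS.
by rewrite add1n subSn // subnn.
Qed.

Lemma g_one_r j y A : g j y A = 1 -> r j [set y] = 1.
Proof.
move=> h; apply/eqP; rewrite eq_le r_pt /=; rewrite -h; exact: g_le_pt.
Qed.

Lemma cl_trans j e y A : e \notin A -> y \notin A -> y != e ->
  g j e A = 1 -> g j y (e |: A) = 1 -> g j y A = 1.
Proof.
move=> eA yA ye h1 h2.
have re := g_one_r h1; have ry := g_one_r h2.
have m1 : r j (y |: A) <= r j (y |: (e |: A)).
  by apply: r_mono; rewrite setUA [[set y] :|: [set e]]setUC -setUA subsetUr.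
have m2 : r j A <= r j (e |: A) by apply: r_mono; apply: subsetUr.
move: h1 h2; rewrite /g => h1 h2.
apply/eqP; rewrite eq_le g_le1 /= /g; lra.
Qed.

Lemma uniq1 j j' y A : y \notin A -> (#|SAT y A| <= 1)%N ->
  1 <= g j y A -> 1 <= g j' y A -> j = j'.
Proof.
move=> yA hS h1 h2; apply/eqP/negPn/negP => jj.
have := sum_ge2 (fun j0 => g_ge0 j0 y A) jj; rewrite Gsum //.
have : (#|SAT y A|%:Z <= 1) by rewrite lez_nat.
lra.
Qed.

Lemma zero_other j j' y A : y \notin A -> (#|SAT y A| <= 1)%N ->
  1 <= g j y A -> j' != j -> g j' y A = 0.
Proof.
move=> yA hS h1 jj; apply: (@sum_rest0 _ (fun j0 => g j0 y A) j) => //.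
  by move=> j0; apply: g_ge0.
rewrite Gsum //; have : (#|SAT y A|%:Z <= 1) by rewrite lez_nat.
lra.
Qed.

Lemma SAT_pt_card x y : x != y -> (#|SAT y [set x]| <= 1)%N.
Proof.
move=> xy; apply: (leq_trans (SAT_card _)); first by rewrite inE eq_sym.
by rewrite cards1.
Qed.

Definition par j x x' := g j x' [set x] = 1.

Lemma par_edge j x y : x != y -> par j x y ->
  exists L, [/\ x \in X L, y \in X L & t L = 1%N].
Proof.
move=> xy h.
have : (0 < #|SAT y [set x]|)%N.
  rewrite -ltz_nat -Gsum; last by rewrite inE eq_sym.
  have := le_sum1 j (fun j0 => g_ge0 j0 y [set x]); rewrite /par in h; rewrite h; lra.
rewrite card_gt0 => /set0Pn [L]; rewrite inE => /andP[yL].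
rewrite cardIs1 => h1; have h0 := Ht1 L.
have xL : x \in X L by move: h1 h0; case: (x \in X L) => //=; rewrite leqn0 => /eqP ->.
exists L; split => //; apply/eqP; rewrite eqn_leq h0 andbT.
by move: h1; rewrite xL.
Qed.

Lemma par_sym j x y : par j x y -> par j y x.
Proof. by rewrite /par /g setUC; move=> h; rewrite -h; ring. Qed.

Lemma par_trans j x y z : x != z -> y != x -> y != z -> par j x y -> par j y z -> par j x z.
Proof.
move=> xz yx yz h1 h2; rewrite /par.
apply: (@cl_trans j y z [set x]); rewrite ?inE ?(eq_sym z) //.
have := @g_mono j z [set y] [set y; x] (subsetUl _ _).
rewrite !inE negb_or (eq_sym z) yz (eq_sym z) xz => /(_ isT).
rewrite /par in h2; rewrite h2 => h; apply/eqP; rewrite eq_le g_le1 h.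
done.
Qed.

Lemma r_pair_le j x y : r j [set x; y] <= r j [set x] + r j [set y].
Proof. have := r_sub j [set x] [set y]; have := r_ge0 j ([set x] :&: [set y]); lra. Qed.

Lemma g0_pair j x y : g j y [set x] = 0 -> r j [set x; y] = r j [set x] + r j [set y].
Proof. by rewrite /g setUC => h; move: h; rewrite /g; lra. Qed.

Lemma SL j x c0 (U V W : {set E}) : x \in U -> x \in V ->
  W \subset c0 |: (U :|: V) -> r j U + r j V <= r j W + r j [set x] ->
  r j [set x] + 1 <= r j [set x; c0] ->
  1 <= g j c0 U -> 1 <= g j c0 V -> False.
Proof.
move=> xU xV sW hUV hx gU gV.
have := r_sub j (c0 |: U) (c0 |: V).
have m1 : r j W <= r j ((c0 |: U) :|: (c0 |: V)).
  apply: r_mono; apply: (subset_trans sW); apply/subsetP => z; rewrite !inE.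
  by case: (z == c0) => //=; case: (z \in U).
have m2 : r j [set x; c0] <= r j ((c0 |: U) :&: (c0 |: V)).
  apply: r_mono; apply/subsetP => z; rewrite !inE.
  by case/orP => /eqP ->; rewrite ?eqxx ?xU ?xV ?orbT.
have p1 := r_pt j c0.
move: gU gV; rewrite /g; lra.
Qed.

Lemma SAT_le1_L L d (A : {set E}) : d \in X L -> A \subset X L -> d \notin A ->
  (#|SAT d A| <= 1)%N.
Proof.
move=> dL sA dA; rewrite -(cards1 L); apply: subset_leq_card; apply/subsetP => m.
rewrite !inE => /andP[dm hm].
have : (0 < #|A :&: X m|)%N by have := Ht1 m; lia.
rewrite card_gt0 => /set0Pn [x]; rewrite inE => /andP[xA xm].
apply/eqP; apply: (pair_unique (x := x) (y := d)) => //.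
  by apply: contraNneq dA => <-.
exact: (subsetP sA).
Qed.

Lemma Qlemma j L a b d c0 : a != b -> a != d -> b != d ->
  a \in X L -> b \in X L -> d \in X L -> c0 \notin X L ->
  par j a b -> par j a d -> par j a c0 -> par j b c0 -> par j d c0 -> False.
Proof.
move=> ab ad bd aL bL dL c0L pab pad pac pbc pdc.
have ca : a != c0 by apply: contraNneq c0L => <-.
have cb : b != c0 by apply: contraNneq c0L => <-.
have cd : d != c0 by apply: contraNneq c0L => <-.
have oth : forall x x', x \in X L -> x' \in X L -> x != x' -> x != c0 -> x' != c0 ->
    par j x c0 -> par j x' c0 -> exists j1, j1 != j /\ 1 <= g j1 c0 [set x; x'].
  move=> x x' xL x'L xx' xc x'c px px'.
  have [La [xLa cLa tLa]] := par_edge xc px.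
  have [Lb [xLb cLb tLb]] := par_edge x'c px'.
  have LaLb : La != Lb.
    apply/eqP => e; subst Lb.
    have := pair_unique xx' xL x'L xLa xLb => e; subst La.
    by rewrite cLa in c0L.
  have c0A : c0 \notin [set x; x'] by rewrite !inE negb_or !(eq_sym c0) xc x'c.
  apply: other_pos => [j'|j'|]; [exact: g_ge0 | exact: g_le1 |].
  rewrite Gsum //.
  have : (1 < #|SAT c0 [set x; x']|)%N.
    apply: (two_card (x := La) (y := Lb)) => //; rewrite inE ?cLa ?cLb /= ?tLa ?tLb card_gt0;
      apply/set0Pn; [exists x | exists x']; rewrite !inE eqxx ?xLa ?xLb /= ?orbT //.
  by move=> h; rewrite -[2]/(2%:Z) lez_nat.
have [j1 [j1j g1]] := oth a b aL bL ab ca cb pac pbc.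
have [j2 [j2j g2]] := oth a d aL dL ad ca cd pac pdc.
have [j3 [j3j g3]] := oth b d bL dL bd cb cd pbc pdc.
pose W := d |: [set a; b].
have c0W : c0 \notin W by rewrite !inE !negb_or !(eq_sym c0) ca cb cd.
have indep : forall j', j' != j -> r j' W = r j' [set a] + r j' [set b] + r j' [set d].
  move=> j' j'j.
  have h1 : g j' b [set a] = 0.
    apply: (zero_other (j := j)) => //; [by rewrite inE eq_sym | exact: SAT_pt_card | ].
    by rewrite pab.
  have h2 : g j' d [set a; b] = 0.
    apply: (zero_other (j := j)) => //.
    - by rewrite !inE !negb_or !(eq_sym d) ad bd.
    - apply: (SAT_le1_L dL); first by rewrite subUset !sub1set aL bL.
      by rewrite !inE !negb_or !(eq_sym d) ad bd.
    - have := @g_mono j d [set a] [set a; b] (subsetUl _ _).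
      rewrite !inE negb_or !(eq_sym d) ad bd /= => /(_ isT).
      by rewrite pad.
  move: h2; rewrite /g -/W (g0_pair h1); lra.
have ptc : forall x j', x != c0 -> par j x c0 -> j' != j -> 1 <= r j' [set c0] ->
    r j' [set x] + 1 <= r j' [set x; c0].
  move=> x j' xc px j'j hc.
  have h : g j' c0 [set x] = 0.
    apply: (zero_other (j := j)) => //; [by rewrite inE eq_sym | exact: SAT_pt_card | by rewrite px].
  by rewrite (g0_pair h); lra.
have rc : forall j' U, 1 <= g j' c0 U -> 1 <= r j' [set c0].
  by move=> j' U h; have := g_le_pt j' c0 U; lra.
have pl := r_pair_le.
case: (eqVneq j1 j2) => [e12|n12].
  subst j2.
  apply: (@SL j1 a c0 [set a; b] [set a; d] W); rewrite ?inE ?eqxx //.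
  - by apply/subsetP => z; rewrite /W !inE => /or3P[]/eqP ->; rewrite !eqxx ?orbT.
  - rewrite indep //; have := pl j1 a b; have := pl j1 a d; lra.
  - exact: (ptc a j1 ca pac j1j (rc _ _ g1)).
case: (eqVneq j1 j3) => [e13|n13].
  subst j3.
  apply: (@SL j1 b c0 [set a; b] [set b; d] W); rewrite ?inE ?eqxx ?orbT //.
  - by apply/subsetP => z; rewrite /W !inE => /or3P[]/eqP ->; rewrite !eqxx ?orbT.
  - rewrite indep //; have := pl j1 a b; have := pl j1 b d; lra.
  - exact: (ptc b j1 cb pbc j1j (rc _ _ g1)).
case: (eqVneq j2 j3) => [e23|n23].
  subst j3.
  apply: (@SL j2 d c0 [set a; d] [set b; d] W); rewrite ?inE ?eqxx ?orbT //.
  - by apply/subsetP => z; rewrite /W !inE => /or3P[]/eqP ->; rewrite !eqxx ?orbT.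
  - rewrite indep //; have := pl j2 a d; have := pl j2 b d; lra.
  - exact: (ptc d j2 cd pdc j2j (rc _ _ g2)).
have gW : forall j' (U : {set E}), U \subset W -> 1 <= g j' c0 U -> 1 <= g j' c0 W.
  move=> j' U sU h; apply: (le_trans h); exact: g_mono.
have gj : 1 <= g j c0 W.
  apply: (gW j [set a]); first by rewrite sub1set !inE eqxx orbT.
  by rewrite pac.
have sab : [set a; b] \subset W by apply: subsetUr.
have sad : [set a; d] \subset W.
  by apply/subsetP => z; rewrite !inE; case: (z == d); case: (z == a); rewrite ?orbT.
have sbd : [set b; d] \subset W.
  by apply/subsetP => z; rewrite !inE; case: (z == d); case: (z == b); rewrite ?orbT.
have jj1 : j != j1 by rewrite eq_sym.
have jj2 : j != j2 by rewrite eq_sym.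
have jj3 : j != j3 by rewrite eq_sym.
have := sum_ge4 (fun j0 => g_ge0 j0 c0 W) jj1 jj2 jj3 n12 n13 n23.
rewrite Gsum //.
have hW : (#|SAT c0 W| <= 3)%N.
  apply: (leq_trans (SAT_card c0W)).
  rewrite /W cardsU1 cards2; by case: (d \in [set a; b]); case: (a != b).
have := gW j1 _ sab g1; have := gW j2 _ sad g2; have := gW j3 _ sbd g3.
move: hW; rewrite -lez_nat => hW.
move: gj; lra.
Qed.

Section Colour.
Variable c : 'I_n -> 'I_k.
Hypothesis HT : forall i, (2 <= #|X i|)%N -> (t i < #|X i|)%N.
Hypothesis Hc : forall i, (2 <= #|X i|)%N -> unif i (c i).
Hypothesis Htle : forall i, (t i <= #|X i|)%N.
Hypothesis H3 : ~ (exists a b c : E, [/\ a != b, a != c, b != c &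
       [/\ exists i, X i = [set a; b], exists i, X i = [set a; c]
         & exists i, X i = [set b; c]]]).

Lemma U_par i x x' : (2 <= #|X i|)%N -> t i = 1%N -> x \in X i -> x' \in X i -> x != x' ->
  par (c i) x x'.
Proof.
move=> h2 t1 xi x'i xx'; apply: (Hc h2); rewrite ?sub1set ?cards1 ?t1 //.
by rewrite inE eq_sym.
Qed.

Lemma U_col i j x x' : (2 <= #|X i|)%N -> t i = 1%N -> x \in X i -> x' \in X i -> x != x' ->
  par j x x' -> j = c i.
Proof.
move=> h2 t1 xi x'i xx' p; apply: (@uniq1 _ _ x' [set x]).
- by rewrite inE eq_sym.
- exact: SAT_pt_card.
- by rewrite p.
- by rewrite (U_par h2 t1 xi x'i xx').
Qed.

Lemma two_in i y : (2 <= #|X i|)%N -> y \in X i -> exists a, a \in X i /\ a != y.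
Proof.
move=> h2 yi; have : (0 < #|X i :\ y|)%N by rewrite cardD1in //; lia.
by rewrite card_gt0 => /set0Pn [a]; rewrite !inE => /andP[ay ai]; exists a.
Qed.

Lemma L1 m m' y : m != m' -> (2 <= #|X m|)%N -> (2 <= #|X m'|)%N -> t m = 1%N -> t m' = 1%N ->
  y \in X m -> y \in X m' -> c m = c m' -> False.
Proof.
move=> mm' h2 h2' t1 t1' ym ym' cc.
set j := c m.
have [a [am ay]] := two_in h2 ym.
have [b [bm' by']] := two_in h2' ym'.
have pya : par j y a by apply: U_par; rewrite // eq_sym.
have pyb : par j y b by rewrite /j cc; apply: U_par; rewrite // eq_sym.
have ab : a != b.
  apply/eqP => e; subst b; move/negP: mm'; apply; apply/eqP; exact: (pair_unique ay am ym bm' ym').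
have pab : par j a b.
  by apply: (@par_trans j a y b ab); rewrite 1?eq_sym //; exact: par_sym.
have bm : b \notin X m.
  apply/negP => bm; move/negP: mm'; apply; apply/eqP; exact: (pair_unique by' bm ym bm' ym').
have am' : a \notin X m'.
  apply/negP => am'; move/negP: mm'; apply; apply/eqP; exact: (pair_unique ay am ym am' ym').
have [/existsP [a' /and3P[a'm a'y a'a]] | noA] := boolP [exists a', [&& a' \in X m, a' != y & a' != a]].
  have pya' : par j y a' by apply: U_par; rewrite // eq_sym.
  have a'b : a' != b by apply: contraNneq bm => <-.
  have pa'b : par j a' b.
    by apply: (@par_trans j a' y b a'b); rewrite 1?eq_sym //; exact: par_sym.
  apply: (@Qlemma j m y a a' b) => //; rewrite ?(eq_sym y) //.
  by rewrite eq_sym.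
have [/existsP [b' /and3P[b'm b'y b'b]] | noB] := boolP [exists b', [&& b' \in X m', b' != y & b' != b]].
  have pyb' : par j y b' by rewrite /j cc; apply: U_par; rewrite // eq_sym.
  have b'a : b' != a by apply: contraNneq am' => <-.
  have pb'a : par j b' a.
    by apply: (@par_trans j b' y a b'a); rewrite 1?eq_sym //; exact: par_sym.
  apply: (@Qlemma j m' y b b' a) => //; rewrite ?(eq_sym y) //.
  - by rewrite eq_sym.
  - exact: par_sym.
have Xm : X m = [set y; a].
  apply/eqP; rewrite eqEsubset; apply/andP; split.
    apply/subsetP => x xm; rewrite !inE; apply/negPn/negP; rewrite negb_or => /andP[xy xa].
    by move: noA; rewrite negb_exists => /forallP /(_ x); rewrite xm xy xa.
  by apply/subsetP => x; rewrite !inE => /orP[] /eqP ->.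
have Xm' : X m' = [set y; b].
  apply/eqP; rewrite eqEsubset; apply/andP; split.
    apply/subsetP => x xm; rewrite !inE; apply/negPn/negP; rewrite negb_or => /andP[xy xb].
    by move: noB; rewrite negb_exists => /forallP /(_ x); rewrite xm xy xb.
  by apply/subsetP => x; rewrite !inE => /orP[] /eqP ->.
have [L [aL bL tL]] := par_edge ab pab.
have h2L : (2 <= #|X L|)%N by apply: (two_card (x := a) (y := b)).
have cL : j = c L := U_col h2L tL aL bL ab pab.
have [/existsP [c' /and3P[c'L c'a c'b]] | noC] := boolP [exists c', [&& c' \in X L, c' != a & c' != b]].
  have yL : y \notin X L.
    apply/negP => yL; have eL : L = m by apply: (pair_unique ay aL yL am ym).
    by rewrite -eL bL in bm.
  have pac' : par j a c' by rewrite cL; apply: U_par; rewrite // eq_sym.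
  have pbc' : par j b c' by rewrite cL; apply: U_par; rewrite // eq_sym.
  have c'y : c' != y by apply: contraNneq yL => <-.
  have pc'y : par j c' y.
    apply: (@par_trans j c' a y) => //.
    - by rewrite eq_sym.
    - exact: par_sym.
    - exact: par_sym.
  apply: (@Qlemma j L a b c' y) => //; rewrite ?(eq_sym c') //.
  - by rewrite eq_sym.
  - by rewrite eq_sym.
  - exact: par_sym.
  - exact: par_sym.
apply: H3; exists y, a, b; split => //; first by rewrite eq_sym.
  by rewrite eq_sym.
split; [by exists m | by exists m' |].
exists L; apply/eqP; rewrite eqEsubset; apply/andP; split.
  apply/subsetP => x xL; rewrite !inE; apply/negPn/negP; rewrite negb_or => /andP[xa xb].
  by move: noC; rewrite negb_exists => /forallP /(_ x); rewrite xL xa xb.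
by apply/subsetP => x; rewrite !inE => /orP[] /eqP ->.
Qed.

Lemma pigeon_SAT j y A : y \notin A -> 1 <= g j y A ->
  (forall p, p \in SAT y A -> c p != j /\ 1 <= g (c p) y A) ->
  {in SAT y A &, injective c} -> False.
Proof.
move=> yA gj hp inj.
pose C := j |: [set c p | p in SAT y A].
have hC : #|C| = (#|SAT y A|).+1.
  rewrite /C cardsU1 card_in_imset //.
  have -> : j \notin [set c p | p in SAT y A].
    by apply/imsetP => -[p pS e]; have [+ _] := hp p pS; rewrite -e eqxx.
  by [].
have := @pigeon _ (fun j0 => g j0 y A) C (fun j0 => g_ge0 j0 y A).
rewrite Gsum // hC.
have : forall j0, j0 \in C -> 1 <= g j0 y A.
  move=> j0; rewrite /C !inE => /orP[/eqP -> //|/imsetP [p pS ->]].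
  by have [_ ->] := hp p pS.
move=> h /(_ h); rewrite lez_nat ltnn.
by [].
Qed.

Lemma sub_in_X i p (A : {set E}) : i != p -> A \subset X i -> (#|A :&: X p| <= 1)%N.
Proof.
move=> ip sA; apply: (leq_trans _ (H2 ip)); apply: subset_leq_card; exact: setSI.
Qed.

Lemma L2 i m y : (2 <= #|X i|)%N -> (2 <= #|X m|)%N -> (2 <= t i)%N -> t m = 1%N ->
  y \in X i -> y \in X m -> c i = c m -> False.
Proof.
move=> h2i h2m t2 t1 yi ym cc.
have im : i != m by apply/eqP => e; subst m; rewrite t1 in t2.
set j := c i.
have [z [zm zy]] := two_in h2m ym.
have zi : z \notin X i.
  apply/negP => zi; move/negP: im; apply; apply/eqP; exact: (pair_unique zy zi yi zm ym).
have ltx := HT h2i.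
have [S [sS hS]] : exists S, S \subset X i :\ y /\ #|S| = t i.
  by apply: sub_card; rewrite cardD1in //; move: ltx; clear; lia.
have sSi : S \subset X i by apply: (subset_trans sS); apply: subD1set.
have yS : y \notin S by apply/negP => /(subsetP sS); rewrite !inE eqxx.
have zS : z \notin S by apply/negP => /(subsetP sSi); rewrite (negbTE zi).
have g1 : g j y S = 1 by apply: (Hc h2i).
have pyz : par j y z by rewrite /j cc; apply: U_par; rewrite // eq_sym.
have g2 : g j z (y |: S) = 1.
  apply/eqP; rewrite eq_le g_le1 /=; rewrite /par in pyz; rewrite -pyz.
  apply: g_mono; first exact: subsetUl.
  by rewrite !inE negb_or zy zS.
have g3 : g j z S = 1 by apply: (cl_trans (e := y)).
have sat : forall p, p \in SAT z S ->
    [/\ z \in X p, t p = 1%N, (2 <= #|X p|)%N & exists s, s \in S /\ s \in X p].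
  move=> p; rewrite inE => /andP[zp hp].
  have pi : p != i by apply: contraNneq zi => <-.
  have hsp : (#|S :&: X p| <= 1)%N by apply: (sub_in_X (i := i)) => //; rewrite eq_sym.
  have tp : t p = 1%N by apply/eqP; rewrite eqn_leq Ht1 andbT (leq_trans hp hsp).
  have : (0 < #|S :&: X p|)%N by rewrite (leq_trans _ hp) // Ht1.
  rewrite card_gt0 => /set0Pn [s]; rewrite inE => /andP[sS' sp].
  have sz : s != z by apply: contraNneq zS => <-.
  have h2p : (2 <= #|X p|)%N by apply: (two_card (x := s) (y := z)).
  by split => //; exists s.
apply: (@pigeon_SAT j z S zS); first by rewrite g3.
  move=> p pS; have [zp tp h2p [s [sS' sp]]] := sat p pS.
  have sz : s != z by apply: contraNneq zS => <-.
  have gp : g (c p) z [set s] = 1 := U_par h2p tp sp zp sz.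
  split.
    apply/eqP => e.
    have psz : par j s z by rewrite -e.
    have sy : s != y by apply: contraNneq yS => <-.
    have psy : par j s y.
      apply: (@par_trans j s z y) => //; [by rewrite eq_sym | exact: par_sym].
    have si : s \in X i by apply: (subsetP sSi).
    have h0 : #|SAT y [set s]| = 0%N.
      apply/eqP; rewrite cards_eq0; apply/eqP/setP => q; rewrite !inE.
      apply/negP => /andP[yq]; rewrite cardIs1 => hq.
      have sq : s \in X q.
        by move: hq; have := Ht1 q; case: (s \in X q) => //=; rewrite leqn0 => h /eqP h'; rewrite h' in h.
      have e2 : q = i by apply: (pair_unique sy sq yq si yi).
      by subst q; move: hq; rewrite sq; move: t2; clear; lia.
    have := Gsum (A := [set s]) (y := y); rewrite inE eq_sym sy h0 => /(_ isT) hs.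
    have := le_sum1 j (fun j0 => g_ge0 j0 y [set s]); rewrite hs.
    by rewrite /par in psy; rewrite psy.
  rewrite -gp; apply: g_mono => //; by rewrite sub1set.
move=> p p' pS p'S e.
have [zp tp h2p _] := sat p pS; have [zp' tp' h2p' _] := sat p' p'S.
apply/eqP/negPn/negP => pp'.
exact: (L1 pp' h2p h2p' tp tp' zp zp' e).
Qed.

Lemma L3 i l e : i != l -> (2 <= t i)%N -> (2 <= t l)%N ->
  e \in X i -> e \in X l -> c i = c l -> False.
Proof.
move=> il t2i t2l ei el cc.
have h2i : (2 <= #|X i|)%N := leq_trans t2i (Htle i).
have h2l : (2 <= #|X l|)%N := leq_trans t2l (Htle l).
set j := c i.
have [y [yi ye]] := two_in h2i ei.
have ltxi := HT h2i; have ltxl := HT h2l.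
have [S' [sS' hS']] : exists S', S' \subset X i :\ e :\ y /\ #|S'| = (t i - 1)%N.
  apply: sub_card; rewrite cardD1in ?cardD1in //; last by rewrite !inE ye.
  by move: ltxi; clear; lia.
have [T [sT hT]] : exists T0 : {set E}, T0 \subset X l :\ e /\ #|T0| = t l.
  by apply: (@sub_card E); rewrite cardD1in //; move: ltxl; clear; lia.
have sS'i : S' \subset X i.
  by apply: (subset_trans sS'); apply: subset_trans (subD1set _ _) (subD1set _ _).
have sTl : T \subset X l by apply: (subset_trans sT); apply: subD1set.
have eS' : e \notin S' by apply/negP => /(subsetP sS'); rewrite !inE eqxx andbF.
have yS' : y \notin S' by apply/negP => /(subsetP sS'); rewrite !inE eqxx.
have eT : e \notin T by apply/negP => /(subsetP sT); rewrite !inE eqxx.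
have yl : y \notin X l.
  apply/negP => yl; move/negP: il; apply; apply/eqP; exact: (pair_unique ye yi ei yl el).
have Ti : forall x, x \in T -> x \notin X i.
  move=> x xT; apply/negP => xi.
  have xe : x != e by apply: contraNneq eT => <-.
  move/negP: il; apply; apply/eqP; exact: (pair_unique xe xi ei (subsetP sTl x xT) el).
pose A := T :|: S'.
have eA : e \notin A by rewrite inE negb_or eT eS'.
have yA : y \notin A.
  rewrite inE negb_or yS' andbT; apply/negP => /(subsetP sTl); by rewrite (negbTE yl).
have g1 : g j e T = 1 by rewrite /j cc; apply: (Hc h2l).
have g2 : g j y (e |: S') = 1.
  apply: (Hc h2i) => //.
  - by rewrite subUset sub1set ei sS'i.
  - by rewrite cardsU1 eS' hS'; move: t2i; clear; lia.
  - by rewrite !inE negb_or ye yS'.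
have g3 : g j e A = 1.
  apply/eqP; rewrite eq_le g_le1 /= -g1; apply: g_mono => //; exact: subsetUl.
have g4 : g j y (e |: A) = 1.
  apply/eqP; rewrite eq_le g_le1 /= -g2; apply: g_mono.
    by apply: setUS; apply: subsetUr.
  by rewrite in_setU1 negb_or ye yA.
have g5 : g j y A = 1 by apply: (cl_trans (e := e)).
have sat : forall p, p \in SAT y A ->
    [/\ y \in X p, t p = 1%N, (2 <= #|X p|)%N & exists v, v \in A /\ v \in X p].
  move=> p; rewrite inE => /andP[yp hp].
  have AiS : A :&: X i \subset S'.
    apply/subsetP => x; rewrite !inE => /andP[/orP[xT|xS] xi] //.
    by move: (Ti x xT); rewrite xi.
  have pi : p != i.
    apply/eqP => e'; subst p.
    have := subset_leq_card AiS; rewrite hS'; move: hp t2i; clear; lia.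
  have ApT : A :&: X p \subset T :&: X p.
    apply/subsetP => x; rewrite !inE => /andP[/orP[xT|xS] xp]; rewrite ?xT ?xp //.
    have xi : x \in X i by apply: (subsetP sS'i).
    have xy : x != y by apply: contraNneq yS' => <-.
    by move/negP: pi; rewrite (pair_unique xy xp yp xi yi) eqxx.
  have pl : p != l by apply: contraNneq yl => <-.
  have hsp : (#|T :&: X p| <= 1)%N by apply: (sub_in_X (i := l)) => //; rewrite eq_sym.
  have hAp := subset_leq_card ApT.
  have tp : t p = 1%N by apply/eqP; rewrite eqn_leq Ht1 andbT (leq_trans hp (leq_trans hAp hsp)).
  have : (0 < #|A :&: X p|)%N by rewrite (leq_trans _ hp) // Ht1.
  rewrite card_gt0 => /set0Pn [v]; rewrite inE => /andP[vA vp].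
  have vy : v != y by apply: contraNneq yA => <-.
  have h2p : (2 <= #|X p|)%N by apply: (two_card (x := v) (y := y)).
  by split => //; exists v.
apply: (@pigeon_SAT j y A yA); first by rewrite g5.
  move=> p pS; have [yp tp h2p [v [vA vp]]] := sat p pS.
  have vy : v != y by apply: contraNneq yA => <-.
  have gp : g (c p) y [set v] = 1 := U_par h2p tp vp yp vy.
  split.
    apply/eqP => e'.
    by apply: (L2 h2i h2p t2i tp yi yp); rewrite e'.
  rewrite -gp; apply: g_mono => //; by rewrite sub1set.
move=> p p' pS p'S e'.
have [zp tp h2p _] := sat p pS; have [zp' tp' h2p' _] := sat p' p'S.
apply/eqP/negPn/negP => pp'.
exact: (L1 pp' h2p h2p' tp tp' zp zp' e').
Qed.

Lemma adj_ne i l : i != l -> (2 <= #|X i|)%N -> (2 <= #|X l|)%N ->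
  X i :&: X l != set0 -> c i != c l.
Proof.
move=> il h2i h2l /set0Pn [y]; rewrite inE => /andP[yi yl].
apply/eqP => cc.
have ti := Ht1 i; have tl := Ht1 l.
case: (eqVneq (t i) 1%N) => [t1i|t2i]; case: (eqVneq (t l) 1%N) => [t1l|t2l].
- exact: (L1 il h2i h2l t1i t1l yi yl cc).
- by apply: (L2 h2l h2i _ t1i yl yi); [move: tl t2l; clear; lia | rewrite cc].
- by apply: (L2 h2i h2l _ t1l yi yl cc); move: ti t2i; clear; lia.
- by apply: (L3 il _ _ yi yl cc); [move: ti t2i | move: tl t2l]; clear; lia.
Qed.

End Colour.

Lemma w_le_k e : (#|[set m | e \in X m]| <= k)%N.
Proof.
rewrite -lez_nat card_sumZ.
have -> : \sum_m ((m \in [set m | e \in X m]) : nat)%:Z = rho_of X t [set e].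
  by rewrite rho_pt; apply: eq_bigr => m _; rewrite inE.
rewrite Hsum; apply: (@le_trans _ _ (\sum_(j < k) (1 : int))).
  by apply: ler_sum => j _; apply: r_pt.
by rewrite sumr_const card_ord natz.
Qed.

Lemma hard_colorable :
  injective X -> (forall i, X i != set0) ->
  (forall i, (2 <= #|X i|)%N -> (t i < #|X i|)%N) ->
  (forall i, (t i <= #|X i|)%N) ->
  ~ (exists a b c : E, [/\ a != b, a != c, b != c &
       [/\ exists i, X i = [set a; b], exists i, X i = [set a; c]
         & exists i, X i = [set b; c]]]) ->
  colorable (line_graph X) k.
Proof.
move=> Hinj Hne HT Htle H3.
have [c Hc] : exists c : 'I_n -> 'I_k, forall i, (2 <= #|X i|)%N -> unif i (c i).
  apply: (@fin_all_exists _ (fun _ => 'I_k) (fun i cj => (2 <= #|X i|)%N -> unif i cj)) => i.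
  case: (boolP (2 <= #|X i|)%N) => h2.
    by have [cj hcj] := F1 (HT i h2); exists cj.
  have /set0Pn [x xi] := Hne i.
  have : 0 < \sum_(j < k) r j [set x].
    rewrite -Hsum rho_pt (bigD1 i) //= xi.
    have : 0 <= \sum_(m | m != i) ((x \in X m) : nat)%:Z by apply: sumr_ge0.
    have -> : ((true : nat))%:Z = 1 by [].
    lra.
  by move=> /exists_pos [j _]; exists j.
have [col Hcol] : exists col : 'I_n -> 'I_k, forall i,
    ((2 <= #|X i|)%N -> col i = c i) /\
    (~~ (2 <= #|X i|)%N -> forall l, (2 <= #|X l|)%N -> X i :&: X l != set0 -> col i != c l).
  apply: (@fin_all_exists _ (fun _ => 'I_k) (fun i cj => ((2 <= #|X i|)%N -> cj = c i) /\
    (~~ (2 <= #|X i|)%N -> forall l, (2 <= #|X l|)%N -> X i :&: X l != set0 -> cj != c l))) => i.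
  case: (boolP (2 <= #|X i|)%N) => h2.
    by exists (c i); split => // /negP.
  have /set0Pn [e ei] := Hne i.
  have Xi : X i = [set e].
    apply/eqP; rewrite eq_sym eqEcard sub1set ei cards1 /=; move: h2; clear; lia.
  pose N := [set l | (l != i) && (e \in X l)].
  have hN : (#|N| < k)%N.
    have := w_le_k e.
    rewrite (cardsD1 i [set m | e \in X m]) inE ei.
    have -> : [set m | e \in X m] :\ i = N.
      by apply/setP => l; rewrite !inE andbC.
    by move=> h; apply: leq_trans h.
  have hcN : (#|c @: N| < k)%N by apply: leq_ltn_trans hN; apply: leq_imset_card.
  have : (0 < #|~: (c @: N)|)%N by rewrite cardsCs setCK card_ord subn_gt0.
  rewrite card_gt0 => /set0Pn [cj]; rewrite inE => cjN.
  exists cj; split => //.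
  move=> _ l h2l /set0Pn [x]; rewrite inE Xi !inE => /andP[/eqP xe xl]; subst x.
  have li : l != i by apply: contraTneq h2l => ->; rewrite Xi cards1.
  apply: contraNneq cjN => ->; apply/imsetP; exists l => //.
  by rewrite inE li xl.
exists col => u v /andP[uv uvX].
case: (boolP (2 <= #|X u|)%N) => h2u; case: (boolP (2 <= #|X v|)%N) => h2v.
- by rewrite (Hcol u).1 // (Hcol v).1 //; apply: adj_ne.
- rewrite (Hcol u).1 // eq_sym; apply: (Hcol v).2 => //; by rewrite setIC.
- by rewrite (Hcol v).1 //; apply: (Hcol u).2.
- exfalso; move: uvX => /set0Pn [x]; rewrite inE => /andP[xu xv].
  have e1 : X u = [set x].
    apply/eqP; rewrite eq_sym eqEcard sub1set xu cards1 /=; move: h2u; clear; lia.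
  have e2 : X v = [set x].
    apply/eqP; rewrite eq_sym eqEcard sub1set xv cards1 /=; move: h2v; clear; lia.
  by move/negP: uv; apply; apply/eqP; apply: Hinj; rewrite e1 e2.
Qed.

End Hard.


Local Close Scope ring_scope.

Theorem corollary2p11 (E : finType) (n : nat) (X : 'I_n -> {set E})
  (t : 'I_n -> nat) (k : nat) :
  hypergraph X ->
  (forall i, t i <= #|X i|) ->
  (* (H1) *)
  (forall e : E, 2 <= hdeg X e) ->
  (* (H2) *)
  (forall i j, i != j -> #|X i :&: X j| <= 1) ->
  (* (H3) *)
  ~ (exists a b c : E, [/\ a != b, a != c, b != c &
       [/\ exists i, X i = [set a; b], exists i, X i = [set a; c]
         & exists i, X i = [set b; c]]]) ->
  (* (T) *)
  (forall i, t i = 1 \/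
     ((exists2 e, e \in X i & hdeg X e <= t i) /\ t i < #|X i|)) ->
  critical (line_graph X) k ->
  excluded_minor_Dk k (rho_of X t).
Proof.
move=> [Hinj Hne] Htle H1 H2 H3 HT [Hchi Hcrit].
have Ht1 : forall i, (1 <= t i)%N.
  move=> i; case: (HT i) => [-> //|[[e _ he] _]].
  by apply: leq_trans he; apply: leq_trans (H1 e).
have HT' : forall i, (2 <= #|X i|)%N -> (t i < #|X i|)%N.
  by move=> i h2; case: (HT i) => [->|[_ //]].
split.
- exact: rho_poly.
- move=> [r [Hr Hs]].
  have Hsum : forall A, rho_of X t A = (\sum_(j < k) r j A)%R.
    by move=> A; apply: Hs; apply: subsetT.
  have := hard_colorable Hr Hsum Ht1 H2 Hinj Hne HT' Htle H3.
  by case: Hchi => _ /(_ k (ltnSn k)).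
- by move=> A B dAB nAB; apply: minors_in_Dk.
Qed.
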